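(* Let $q(x_1,\ldots,x_m)=(q_1(x_1),\ldots,q_m(x_m))$ with each $q_i(x_i)\in\mathbb{R}$, where each input component $x_i$ lies in a metric space with metric $d$. Define the distance between inputs $x=(x_1,\ldots,x_m)$ and $x'=(x'_1,\ldots,x'_m)$ as $d(x,x')=\|(d(x_1,x'_1),\ldots,d(x_m,x'_m))\|_p$ for some $p\in[1,\infty]$. For each $i$ let $\tilde q_i$ be an $\epsilon_i$-differentially private mechanism for $q_i$, the mechanisms using independent randomness. Then the mechanism $\tilde q=(\tilde q_1,\ldots,\tilde q_m)$ is $\|(\epsilon_1,\ldots,\epsilon_m)\|_{p^*}$-differentially private with respect to $d$, where $\ell_{p^*}$ is the dual norm of $\ell_p$ (i.e. $1/p+1/p^*=1$).
   Context: A randomized mechanism $M$ on a metric space with metric $d$ is $\epsilon$-differentially private ($\epsilon\ge0$) if for all inputs $x,x'$ with $d(x,x')\le D$ and every set $S$ of outputs, $\Pr[M(x)\in S]\le e^{D\epsilon}\Pr[M(x')\in S]$. For $\tilde q_i$ this is with respect to the metric $d$ on the $i$-th input component; for $\tilde q$ it is with respect to the $\ell_p$-combined distance above, with output sets $S\subseteq\mathbb{R}^m$. *)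

(* Defs.v *)
From HB Require Import structures.
From mathcomp Require Import all_boot all_order all_algebra.
From mathcomp Require Import all_classical all_reals all_analysis.
Set Implicit Arguments. Unset Strict Implicit. Unset Printing Implicit Defensive.
Import Order.TTheory GRing.Theory Num.Theory.
Local Open Scope classical_set_scope.
Local Open Scope ring_scope.

Section Defs.
Variable R : realType.

Definition is_metric (T : Type) (d : T -> T -> R) : Prop :=
  (forall x y, 0 <= d x y) /\ (forall x y, d x y = 0 <-> x = y) /\
  (forall x y, d x y = d y x) /\ (forall x y z, d x z <= d x y + d y z).

Definition lpnorm (m : nat) (p : \bar R) (v : 'I_m -> R) : R :=
  match p with
  | EFin r => (\sum_(i < m) `|v i| `^ r) `^ r^-1
  | _ => \big[Num.max/0]_(i < m) `|v i|
  end.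

(* conjugate (dual) exponent p* with 1/p + 1/p* = 1 *)
Definition conj_exp (p : \bar R) : \bar R :=
  match p with
  | EFin r => if r == 1 then +oo%E else (r / (r - 1))%:E
  | _ => 1%E
  end.

Definition lp_dist (T : Type) (d : T -> T -> R) (m : nat) (p : \bar R)
  (x x' : m.-tuple T) : R :=
  lpnorm p (fun i => d (tnth x i) (tnth x' i)).

(* eps-differential privacy of a randomized mechanism M : U -> Omega -> V
   (randomness drawn from the probability space (Omega, P)) w.r.t. dist *)
Definition diff_private (dO : measure_display) (Omega : measurableType dO)
  (P : probability Omega R) (U : Type) (dV : measure_display)
  (V : measurableType dV) (dist : U -> U -> R) (M : U -> Omega -> V)
  (eps : R) : Prop :=
  forall (x x' : U) (D : R), dist x x' <= D ->
  forall S : set V, measurable S ->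
    (P (M x @^-1` S) <= (expR (D * eps))%:E * P (M x' @^-1` S))%E.

Definition mutually_independent (dO : measure_display) (Omega : measurableType dO)
  (P : probability Omega R) (m : nat) (Y : 'I_m -> Omega -> R) : Prop :=
  forall B : 'I_m -> set R, (forall i, measurable (B i)) ->
    P (\bigcap_(i in [set: 'I_m]) (Y i @^-1` B i)) =
    (\prod_(i < m) P (Y i @^-1` B i))%E.

End Defs.

(* Main.v *)
Require Import Defs.
From HB Require Import structures.
From mathcomp Require Import all_boot all_order all_algebra.
From mathcomp Require Import all_classical all_reals all_analysis.
From mathcomp Require Import ring lra.
Import Order.TTheory GRing.Theory Num.Theory.
Local Open Scope classical_set_scope.
Local Open Scope ring_scope.
Set Implicit Arguments. Unset Strict Implicit.

Section holder.
Context (R : realType).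

Lemma zero_case m (v : 'I_m -> R) r : 0 < r -> (forall i, 0 <= v i) ->
  \sum_i v i `^ r = 0 -> forall i, v i = 0.
Proof.
move=> r0 v0 /eqP; rewrite psumr_eq0 => [/allP h i|i _]; last exact: powR_ge0.
by have := h i (mem_index_enum i); rewrite implyTb powR_eq0 (gt_eqF r0) andbT => /eqP.
Qed.

Lemma holder_fin m (a b : 'I_m -> R) (p q : R) :
  (forall i, 0 <= a i) -> (forall i, 0 <= b i) -> 0 < p -> 0 < q -> p^-1 + q^-1 = 1 ->
  \sum_i a i * b i <= (\sum_i a i `^ p) `^ p^-1 * (\sum_i b i `^ q) `^ q^-1.
Proof.
move=> a0 b0 p0 q0 pq.
set SA := \sum_i a i `^ p; set SB := \sum_i b i `^ q.
have SA0 : 0 <= SA by apply: sumr_ge0 => i _; exact: powR_ge0.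
have SB0 : 0 <= SB by apply: sumr_ge0 => i _; exact: powR_ge0.
have RHS0 : 0 <= SA `^ p^-1 * SB `^ q^-1 by rewrite mulr_ge0 ?powR_ge0.
have [SAe|SAn] := eqVneq SA 0.
  by rewrite big1 // => i _; rewrite (zero_case p0 a0 SAe) mul0r.
have [SBe|SBn] := eqVneq SB 0.
  by rewrite big1 // => i _; rewrite (zero_case q0 b0 SBe) mulr0.
have SAp : 0 < SA by rewrite lt_neqAle eq_sym SAn SA0.
have SBp : 0 < SB by rewrite lt_neqAle eq_sym SBn SB0.
set A := SA `^ p^-1; set B := SB `^ q^-1.
have A0 : 0 < A by exact: powR_gt0.
have B0 : 0 < B by exact: powR_gt0.
have ApE : A `^ p = SA by rewrite /A -powRrM (mulVf (lt0r_neq0 p0)) (powRr1 SA0).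
have BqE : B `^ q = SB by rewrite /B -powRrM (mulVf (lt0r_neq0 q0)) (powRr1 SB0).
have AV : A^-1 `^ p = SA^-1.
  by rewrite -(powR_inv1 (ltW A0)) -powRrM mulrC powRrM ApE powR_inv1.
have BV : B^-1 `^ q = SB^-1.
  by rewrite -(powR_inv1 (ltW B0)) -powRrM mulrC powRrM BqE powR_inv1.
have Ai i : (a i / A) `^ p = a i `^ p / SA.
  by rewrite powRM ?invr_ge0 ?(ltW A0)// AV.
have Bi i : (b i / B) `^ q = b i `^ q / SB.
  by rewrite powRM ?invr_ge0 ?(ltW B0)// BV.
apply: (@le_trans _ _ (\sum_i A * B * ((a i / A) `^ p / p + (b i / B) `^ q / q))).
  apply: ler_sum => i _.
  have h := conjugate_powR (divr_ge0 (a0 i) (ltW A0)) (divr_ge0 (b0 i) (ltW B0)) p0 q0 pq.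
  have E1 : A * (a i / A) = a i by rewrite mulrCA (mulfV (lt0r_neq0 A0)) mulr1.
  have E2 : B * (b i / B) = b i by rewrite mulrCA (mulfV (lt0r_neq0 B0)) mulr1.
  have -> : a i * b i = A * B * ((a i / A) * (b i / B)) by rewrite mulrACA E1 E2.
  apply: ler_wpM2l; [exact: mulr_ge0 (ltW A0) (ltW B0) | exact: h].
have SAi : \sum_i (a i / A) `^ p / p = p^-1.
  rewrite -mulr_suml; under eq_bigr do rewrite Ai.
  by rewrite -mulr_suml (mulfV (lt0r_neq0 SAp)) mul1r.
have SBi : \sum_i (b i / B) `^ q / q = q^-1.
  rewrite -mulr_suml; under eq_bigr do rewrite Bi.
  by rewrite -mulr_suml (mulfV (lt0r_neq0 SBp)) mul1r.
by rewrite -mulr_sumr big_split /= SAi SBi pq mulr1.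
Qed.

Lemma lpnorm_ge0 m (p : \bar R) (v : 'I_m -> R) : 0 <= lpnorm p v.
Proof. by case: p => [r| |] /=; rewrite ?powR_ge0 ?bigmax_ge_id. Qed.

Lemma holder_lp m (a b : 'I_m -> R) (p : \bar R) : (1 <= p)%E ->
  (forall i, 0 <= a i) -> (forall i, 0 <= b i) ->
  \sum_i a i * b i <= lpnorm p a * lpnorm (conj_exp p) b.
Proof.
move=> p1 a0 b0.
have sum1 (v : 'I_m -> R) : (forall i, 0 <= v i) ->
    (\sum_i `|v i| `^ 1) `^ 1^-1 = \sum_i v i.
  move=> v0; rewrite invr1 powRr1; last by apply: sumr_ge0 => i _; exact: powR_ge0.
  by apply: eq_bigr => i _; rewrite powRr1 ?ger0_norm.
case: p p1 => [r| |] //= p1.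
- rewrite /conj_exp; case: eqP => [->|r1] /=.
    rewrite sum1// mulr_suml; apply: ler_sum => i _.
    rewrite ler_wpM2l//; apply: le_trans (le_bigmax _ _ i).
    by rewrite ger0_norm.
  have rgt1 : 1 < r by rewrite lt_neqAle eq_sym; apply/andP; split; [apply/eqP|rewrite -lee_fin].
  have -> : \sum_i `|a i| `^ r = \sum_i a i `^ r by apply: eq_bigr => i _; rewrite ger0_norm.
  have -> : \sum_i `|b i| `^ (r / (r - 1)) = \sum_i b i `^ (r / (r - 1)).
    by apply: eq_bigr => i _; rewrite ger0_norm.
  apply: holder_fin => //.
  + by apply: lt_trans rgt1.
  + by apply: divr_gt0; [apply: lt_trans rgt1|rewrite subr_gt0].
  + by field; apply/andP; split; rewrite gt_eqF// ?subr_gt0//; apply: lt_trans rgt1.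
- rewrite sum1// mulr_sumr; apply: ler_sum => i _.
  rewrite ler_wpM2r//; apply: le_trans (le_bigmax _ _ i).
  by rewrite ger0_norm.
Qed.
End holder.

Section law.
Context dO (Omega : measurableType dO) (R : realType) (P : probability Omega R).
Context dT (T : measurableType dT) (X : Omega -> T).
Hypothesis mX : measurable_fun [set: Omega] X.

Definition law := fun A : set T => let _ := mX in P (X @^-1` A).

Let law0 : law set0 = 0%E.
Proof. by rewrite /law preimage_set0 measure0. Qed.

Let law_ge0 A : (0 <= law A)%E.
Proof. exact: measure_ge0. Qed.

Let law_sigma_additive : semi_sigma_additive law.
Proof.
move=> F mF tF mUF; rewrite /law preimage_bigcup.
apply: measure_semi_sigma_additive.
- by move=> n; rewrite -[X in measurable X]setTI; exact: mX.
- apply/trivIsetP => /= i j _ _ ij; rewrite -preimage_setI.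
  by move/trivIsetP : tF => /(_ _ _ _ _ ij) ->//; rewrite preimage_set0.
- by rewrite -preimage_bigcup -[X in measurable X]setTI; exact: mX.
Qed.

HB.instance Definition _ := isMeasure.Build _ _ _ law law0 law_ge0 law_sigma_additive.

Let law_setT : law [set: T] = 1%E.
Proof. by rewrite /law preimage_setT probability_setT. Qed.

HB.instance Definition _ := Measure_isProbability.Build _ _ _ law law_setT.
End law.

Section prodle.
Local Open Scope ereal_scope.
Context d1 d2 (T1 : measurableType d1) (T2 : measurableType d2) (R : realType).
Variables (m1 n1 : probability T1 R) (m2 n2 : probability T2 R).

Lemma prod_le (a b : R) : (0 <= a)%R -> (0 <= b)%R ->
  (forall A, measurable A -> m1 A <= a%:E * n1 A) ->
  (forall A, measurable A -> m2 A <= b%:E * n2 A) ->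
  forall S, measurable S -> (m1 \x m2) S <= (a * b)%:E * (n1 \x n2) S.
Proof.
move=> a0 b0 h1 h2 S mS.
rewrite /product_measure1.
apply: (@le_trans _ _ (\int[m1]_x (b%:E * (n2 \o xsection S) x))).
  apply: (@ge0_le_integral _ _ _ m1 setT measurableT).
  - by move=> x _; apply: measure_ge0; exact: measurable_xsection.
  - exact: (measurable_fun_xsection m2 mS).
  - by apply: measurable_funeM; exact: (measurable_fun_xsection n2 mS).
  - by move=> x _ /=; apply: h2; exact: measurable_xsection.
rewrite ge0_integralZl//; last exact: (measurable_fun_xsection n2 mS).
rewrite EFinM (muleC a%:E) -muleA; apply: lee_wpmul2l => //.
pose na := mscale (NngNum a0) n1.
apply: (@le_trans _ _ (\int[na]_x (n2 \o xsection S) x)).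
  have h1' : forall A, measurable A -> m1 A <= na A by move=> A mA; exact: h1.
  apply: (ge0_le_measure_integral h1') => //.
  exact: (measurable_fun_xsection n2 mS).
by rewrite ge0_integral_mscale//; exact: (measurable_fun_xsection n2 mS).
Qed.
End prodle.

Section lawm.
Context dO (Omega : measurableType dO) (R : realType) (mu : {measure set Omega -> \bar R}).
Context dT (T : measurableType dT) (X : Omega -> T).
Hypothesis mX : measurable_fun [set: Omega] X.

Definition lawm := fun A : set T => let _ := mX in mu (X @^-1` A).

Let lawm0 : lawm set0 = 0%E.
Proof. by rewrite /lawm preimage_set0 measure0. Qed.

Let lawm_ge0 A : (0 <= lawm A)%E.
Proof. exact: measure_ge0. Qed.

Let lawm_sigma_additive : semi_sigma_additive lawm.
Proof.
move=> F mF tF mUF; rewrite /lawm preimage_bigcup.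
apply: measure_semi_sigma_additive.
- by move=> n; rewrite -[X in measurable X]setTI; exact: mX.
- apply/trivIsetP => /= i j _ _ ij; rewrite -preimage_setI.
  by move/trivIsetP : tF => /(_ _ _ _ _ ij) ->//; rewrite preimage_set0.
- by rewrite -preimage_bigcup -[X in measurable X]setTI; exact: mX.
Qed.

HB.instance Definition _ := isMeasure.Build _ _ _ lawm lawm0 lawm_ge0 lawm_sigma_additive.
End lawm.

Section pairlaw.
Local Open Scope ereal_scope.
Context dO (Omega : measurableType dO) (R : realType) (P : probability Omega R).
Context d1 d2 (T1 : measurableType d1) (T2 : measurableType d2).
Variables (X : Omega -> T1) (Y : Omega -> T2).
Hypotheses (mX : measurable_fun [set: Omega] X) (mY : measurable_fun [set: Omega] Y).
Hypothesis indep : forall A B, measurable A -> measurable B ->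
  P (X @^-1` A `&` Y @^-1` B) = P (X @^-1` A) * P (Y @^-1` B).

Lemma pair_law S : measurable S ->
  P ((fun w => (X w, Y w)) @^-1` S) = ((law P mX) \x (law P mY)) S.
Proof.
move=> mS.
have mXY : measurable_fun [set: Omega] (fun w => (X w, Y w)).
  exact: measurable_fun_pair.
rewrite (@product_measure_unique _ _ _ _ _ (law P mX) (law P mY) (lawm P mXY)); [by [] | | exact: mS].
move=> A B mA mB; rewrite /lawm /law /=.
rewrite -indep//; congr (P _); apply/seteqP; split => w //=.
Qed.
End pairlaw.

Section splitcap.
Lemma split_bigcap (T : Type) n (F : 'I_n.+1 -> set T) :
  \bigcap_(i in [set: 'I_n.+1]) F i = F ord0 `&` \bigcap_(j in [set: 'I_n]) F (lift ord0 j).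
Proof.
apply/seteqP; split => w.
  by move=> h; split; [exact: h | move=> j _; exact: h].
move=> [h0 h] i _; case: (unliftP ord0 i) => [j ->|->//]; exact: h.
Qed.
End splitcap.

Section tuples.
Local Open Scope ereal_scope.
Context dO (Omega : measurableType dO) (R : realType) (P : probability Omega R).

Definition tupf n (X : 'I_n -> Omega -> R) : Omega -> n.-tuple R :=
  fun w => [tuple X i w | i < n].

Lemma mtupf n (X : 'I_n -> Omega -> R) :
  (forall i, measurable_fun setT (X i)) -> measurable_fun setT (tupf X).
Proof.
move=> mX; apply/measurable_fun_tnthP => i.
have -> : (@tnth n R ^~ i \o tupf X) = X i by apply/funext => w; rewrite /= tnth_mktuple.
exact: mX.
Qed.

Lemma indep_tail n (X : 'I_n.+1 -> Omega -> R) :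
  mutually_independent P X -> mutually_independent P (fun j => X (lift ord0 j)).
Proof.
move=> hX B mB.
pose B' i := if unlift ord0 i is Some j then B j else setT.
have mB' : forall i, measurable (B' i).
  by move=> i; rewrite /B'; case: (unlift ord0 i) => [j|] //; exact: mB.
have EB j : B' (lift ord0 j) = B j by rewrite /B' liftK.
have E0 : B' ord0 = setT by rewrite /B' unlift_none.
have := hX B' mB'; rewrite split_bigcap big_ord_recl E0 preimage_setT setTI.
rewrite probability_setT mul1e => h.
have -> : \bigcap_(j in [set: 'I_n]) X (lift ord0 j) @^-1` B j =
  \bigcap_(j in [set: 'I_n]) X (lift ord0 j) @^-1` B' (lift ord0 j).
  by apply: eq_bigcapr => j _; rewrite EB.
by rewrite h; apply: eq_bigr => j _; rewrite EB.
Qed.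

End tuples.

Section boxes.
Context (R : realType).
Definition boxes n : set (set (n.-tuple R)) :=
  [set B | exists Bs : 'I_n -> set R, (forall i, measurable (Bs i)) /\
    B = \bigcap_(i in [set: 'I_n]) ((fun u => tnth u i) @^-1` Bs i)].

Lemma boxes_measurable n : (measurable : set (set (n.-tuple R))) = <<s @boxes n>>.
Proof.
apply/seteqP; split.
- move=> X mX; rewrite /measurable /= in mX; move: X mX.
  apply: smallest_sub; first exact: smallest_sigma_algebra.
  case: n => [|n]; first by rewrite big_ord0.
  rewrite -bigcup_mkord_ord; apply: bigcup_sub => i Ii.
  move=> A [B mB <-]; apply: sub_sigma_algebra.
  exists (fun j => if j == inord i then B else setT); split.
    by move=> j; case: ifP.
  apply/seteqP; split => u /=.
    move=> [_ Bu] j _ /=; case: ifPn => [/eqP ->|//]; exact: Bu.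
  by move=> h; split => //; have := h (inord i) I; rewrite /= eqxx.
- apply: smallest_sub; first exact: sigma_algebra_measurable.
  move=> _ [Bs [mBs ->]]; apply: fin_bigcap_measurable; first exact: finite_finset.
  move=> i _.
  rewrite -[X in measurable X]setTI; exact: measurable_tnth.
Qed.

Lemma boxes_setI n : setI_closed (@boxes n).
Proof.
move=> _ _ [Bs [mBs ->]] [Cs [mCs ->]]; exists (fun i => Bs i `&` Cs i); split.
  by move=> i; exact: measurableI.
by rewrite -bigcapI.
Qed.

Lemma boxesT n : @boxes n setT.
Proof.
exists (fun=> setT); split => //.
by apply/seteqP; split => u //= _ i _.
Qed.

End boxes.
Arguments boxes : clear implicits.

Section tuples2.
Local Open Scope ereal_scope.
Context dO (Omega : measurableType dO) (R : realType) (P : probability Omega R).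
Lemma tupf_box n (X : 'I_n -> Omega -> R) (Bs : 'I_n -> set R) :
  tupf X @^-1` (\bigcap_(i in [set: 'I_n]) ((fun u => tnth u i) @^-1` Bs i)) =
  \bigcap_(i in [set: 'I_n]) (X i @^-1` Bs i).
Proof.
have tm : forall w i, tnth (tupf X w) i = X i w.
  by move=> w i; rewrite /tupf tnth_mktuple.
by apply/seteqP; split => w /= h i _; have := h i I; rewrite /= tm.
Qed.

End tuples2.

Section main.
Local Open Scope ereal_scope.
Context dO (Omega : measurableType dO) (R : realType) (P : probability Omega R).

Lemma head_tail n (X : 'I_n.+1 -> Omega -> R) :
  (forall i, measurable_fun setT (X i)) ->
  mutually_independent P X ->
  forall (A : set R) (B : set (n.-tuple R)), measurable A -> measurable B ->
  P (X ord0 @^-1` A `&` tupf (fun j => X (lift ord0 j)) @^-1` B) =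
  P (X ord0 @^-1` A) * P (tupf (fun j => X (lift ord0 j)) @^-1` B).
Proof.
move=> mX hX A B mA mB.
set t := tupf (fun j => X (lift ord0 j)).
have mt : measurable_fun setT t := mtupf (fun j => mX (lift ord0 j)).
have mhA : measurable (X ord0 @^-1` A).
  by rewrite -[X in measurable X]setTI; exact: mX.
pose m1 := lawm (mrestr P mhA) mt.
have hA0 : (0 <= fine (P (X ord0 @^-1` A)))%R by rewrite fine_ge0.
pose m2 := mscale (NngNum hA0) (law P mt).
have EA : P (X ord0 @^-1` A) = (fine (P (X ord0 @^-1` A)))%:E.
  by rewrite fineK// fin_num_measure.
have Em1 : forall B, m1 B = P (t @^-1` B `&` X ord0 @^-1` A) by [].
have Em2 : forall B, m2 B = P (X ord0 @^-1` A) * P (t @^-1` B) by move=> ?; rewrite EA.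
have key : m1 B = m2 B.
  apply: (@measure_unique _ _ _ (boxes R n) (fun=> setT)) => //.
  - exact: boxes_measurable.
  - exact: boxes_setI.
  - by move=> _; exact: boxesT.
  - by apply/seteqP; split => // u _; exists 0%N.
  - move=> _ [Bs [mBs ->]].
    apply: (eq_trans (Em1 _)); apply: (eq_trans _ (esym (Em2 _))); rewrite /t !tupf_box.
    pose B' i := if unlift ord0 i is Some j then Bs j else A.
    have mB' : forall i, measurable (B' i).
      by move=> i; rewrite /B'; case: (unlift ord0 i) => [j|] //; exact: mBs.
    have EB j : B' (lift ord0 j) = Bs j by rewrite /B' liftK.
    have E0 : B' ord0 = A by rewrite /B' unlift_none.
    have := hX B' mB'; rewrite split_bigcap big_ord_recl E0 => h.
    have -> : \bigcap_(j in [set: 'I_n]) X (lift ord0 j) @^-1` Bs j =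
      \bigcap_(j in [set: 'I_n]) X (lift ord0 j) @^-1` B' (lift ord0 j).
      by apply: eq_bigcapr => j _; rewrite EB.
    rewrite setIC h; congr (_ * _).
    have := indep_tail hX (fun j => mB' (lift ord0 j)) => ->.
    by [].
  - move=> _; apply: (@le_lt_trans _ _ (P (t @^-1` setT `&` X ord0 @^-1` A))); first exact: le_refl.
    rewrite (le_lt_trans (probability_le1 _ _)) ?ltry//.
    apply: measurableI => //; rewrite -[X in measurable X]setTI; exact: (mt measurableT).
by have := eq_trans (esym (Em1 B)) (eq_trans key (Em2 B)); rewrite setIC.
Qed.

End main.

Section main2.
Local Open Scope ereal_scope.
Context dO (Omega : measurableType dO) (R : realType) (P : probability Omega R).

Definition phi n (p : R * n.-tuple R) : n.+1.-tuple R :=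
  [tuple (if unlift ord0 i is Some j then tnth p.2 j else p.1) | i < n.+1].

Lemma mphi n : measurable_fun setT (@phi n).
Proof.
apply/measurable_fun_tnthP => i.
have -> : (@tnth _ R ^~ i \o @phi n) =
    (fun p => if unlift ord0 i is Some j then tnth p.2 j else p.1).
  by apply/funext => p; rewrite /= /phi tnth_mktuple.
case: (unlift ord0 i) => [j|] /=; last exact: measurable_fst.
exact: measurableT_comp (measurable_tnth j) measurable_snd.
Qed.

Lemma Ephi n (Y : 'I_n.+1 -> Omega -> R) :
  tupf Y = @phi n \o (fun w => (Y ord0 w, tupf (fun j => Y (lift ord0 j)) w)).
Proof.
apply/funext => w; apply: eq_from_tnth => i.
rewrite /= /phi /tupf !tnth_mktuple.
by case: unliftP => [j|] ->; rewrite ?tnth_mktuple.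
Qed.

Lemma main_ind n : forall (X X' : 'I_n -> Omega -> R) (c : 'I_n -> R),
  (forall i, measurable_fun setT (X i)) -> (forall i, measurable_fun setT (X' i)) ->
  (forall i, 0 <= c i)%R ->
  mutually_independent P X -> mutually_independent P X' ->
  (forall i A, measurable A -> P (X i @^-1` A) <= (c i)%:E * P (X' i @^-1` A)) ->
  forall S, measurable S ->
  P (tupf X @^-1` S) <= (\prod_(i < n) c i)%:E * P (tupf X' @^-1` S).
Proof.
elim: n => [|n IH] X X' c mX mX' c0 iX iX' hc S mS.
  have -> : tupf X' = tupf X.
    by apply/funext => w; rewrite (tuple0 (tupf X w)) (tuple0 (tupf X' w)).
  by rewrite big_ord0 mul1e.
have mQ : measurable (@phi n @^-1` S).
  by rewrite -[X in measurable X]setTI; exact: mphi.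
have mh : measurable_fun setT (X ord0) := mX ord0.
have mh' : measurable_fun setT (X' ord0) := mX' ord0.
have mt := mtupf (fun j => mX (lift ord0 j)).
have mt' := mtupf (fun j => mX' (lift ord0 j)).
rewrite (Ephi X) (Ephi X') !comp_preimage.
rewrite (pair_law mh mt (head_tail mX iX))// (pair_law mh' mt' (head_tail mX' iX'))//.
rewrite big_ord_recl.
apply: prod_le => //.
- exact: prodr_ge0.
- by move=> A mA; exact: hc.
- move=> B mB; apply: IH => //.
  + exact: indep_tail.
  + exact: indep_tail.
  + by move=> j A mA; exact: hc.
Qed.

End main2.

Theorem theorem4 (R : realType) (T : Type) (d : T -> T -> R) (m : nat)
  (p : \bar R) (dO : measure_display) (Omega : measurableType dO)
  (P : probability Omega R) (M : 'I_m -> T -> Omega -> R) (eps : 'I_m -> R) :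
  is_metric d ->
  (1 <= p)%E ->
  (forall i, 0 <= eps i) ->
  (forall i (x : T), measurable_fun [set: Omega] (M i x)) ->
  (forall i, diff_private P d (M i) (eps i)) ->
  (forall x : m.-tuple T, mutually_independent P (fun i => M i (tnth x i))) ->
  diff_private P (lp_dist d p)
    (fun (x : m.-tuple T) (w : Omega) => [tuple M i (tnth x i) w | i < m])
    (lpnorm (conj_exp p) eps).
Proof.
move=> hd p1 eps0 mM dpM indep x x' D hD S mS.
pose di i := d (tnth x i) (tnth x' i).
have di0 : forall i, 0 <= di i by move=> i; case: hd => h _; exact: h.
pose c i := expR (di i * eps i).
have hc : forall i A, measurable A ->
    (P (M i (tnth x i) @^-1` A) <= (c i)%:E * P (M i (tnth x' i) @^-1` A))%E.
  by move=> i A mA; exact: (dpM i (tnth x i) (tnth x' i) (di i) (le_refl _) A mA).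
have h := main_ind (fun i => mM i (tnth x i)) (fun i => mM i (tnth x' i))
  (fun i => ltW (expR_gt0 (di i * eps i))) (indep x) (indep x') hc mS.
apply: (le_trans h); apply: lee_wpmul2r.
  by apply: measure_ge0; rewrite -[X in measurable X]setTI; exact: (mtupf (fun i => mM i (tnth x' i))).
rewrite lee_fin /c -expR_sum ler_expR.
apply: (le_trans (holder_lp p1 di0 eps0)).
by apply: ler_wpM2r; [exact: lpnorm_ge0 | exact: hD].
Qed.
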